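(* Let $H$ be a uniquely vector colorable graph whose unique optimal vector coloring $i\mapsto p_i$ is injective. Then any connected graph $G$ with $H\subseteq G\subseteq H'(p)$ (all on vertex set $V(H)$) is a core.
   Context: A vector $t$-coloring of a graph ($t\ge2$) assigns unit vectors $p_i\in\mathbb{R}^d$ to vertices with $\langle p_i,p_j\rangle\le-1/(t-1)$ for all edges $ij$; $\chi_v$ is the least such $t$, and optimal means $t=\chi_v$. A graph is uniquely vector colorable if any two of its optimal vector colorings have the same Gram matrix. $H'(p)$ is the graph on $V(H)$ in which distinct $u,v$ are adjacent iff $\langle p_u,p_v\rangle\le-1/(\chi_v(H)-1)$. A graph $G$ is a core if every homomorphism (adjacency-preserving map) $G\to G$ is an automorphism. *)

(* Defs.v *)
From HB Require Import structures.
From mathcomp Require Import all_boot all_order all_algebra.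
From mathcomp Require Import reals.
Set Implicit Arguments. Unset Strict Implicit. Unset Printing Implicit Defensive.
Import Order.TTheory GRing.Theory Num.Theory.
Local Open Scope ring_scope.

Definition simple_graph (T : finType) (e : rel T) : Prop :=
  symmetric e /\ irreflexive e.

Definition dotv (R : realType) (d : nat) (u v : 'rV[R]_d) : R :=
  (u *m v^T) 0 0.

Definition vector_coloring (R : realType) (T : finType) (e : rel T)
    (d : nat) (p : T -> 'rV[R]_d) (t : R) : Prop :=
  2 <= t /\ (forall i, dotv (p i) (p i) = 1) /\
  (forall i j, e i j -> dotv (p i) (p j) <= - (t - 1)^-1).

Definition is_vchrom (R : realType) (T : finType) (e : rel T) (t : R) : Prop :=
  (exists d (p : T -> 'rV[R]_d), vector_coloring e p t) /\
  (forall (s : R) d (p : T -> 'rV[R]_d), vector_coloring e p s -> t <= s).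

Definition optimal_vector_coloring (R : realType) (T : finType) (e : rel T)
    (d : nat) (p : T -> 'rV[R]_d) : Prop :=
  exists t : R, is_vchrom e t /\ vector_coloring e p t.

Definition uniquely_vector_colorable (R : realType) (T : finType) (e : rel T)
    : Prop :=
  forall d1 (p1 : T -> 'rV[R]_d1) d2 (p2 : T -> 'rV[R]_d2),
    optimal_vector_coloring e p1 -> optimal_vector_coloring e p2 ->
    forall i j, dotv (p1 i) (p1 j) = dotv (p2 i) (p2 j).

(* H'(p): distinct u v adjacent iff <p_u,p_v> <= -1/(chi_v(H)-1). *)
Definition Hprime (R : realType) (T : finType) (t : R) (d : nat)
    (p : T -> 'rV[R]_d) : rel T :=
  fun u v => (u != v) && (dotv (p u) (p v) <= - (t - 1)^-1).

Definition graph_hom (T : finType) (e : rel T) (f : T -> T) : Prop :=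
  forall u v, e u v -> e (f u) (f v).

Definition graph_aut (T : finType) (e : rel T) (f : T -> T) : Prop :=
  bijective f /\ forall u v, e u v = e (f u) (f v).

Definition is_core (T : finType) (e : rel T) : Prop :=
  forall f : T -> T, graph_hom e f -> graph_aut e f.

Definition connected_graph (T : finType) (e : rel T) : Prop :=
  forall u v, connect e u v.

(* Main.v *)
Require Import Defs.
From HB Require Import structures.
From mathcomp Require Import all_boot all_order all_algebra.
From mathcomp Require Import reals.
Import Order.TTheory GRing.Theory Num.Theory.
Local Open Scope ring_scope.

Lemma dotvE (R : realType) d (u v : 'rV[R]_d) :
  dotv u v = \sum_k u 0 k * v 0 k.
Proof. by rewrite /dotv !mxE; apply: eq_bigr => k _; rewrite mxE. Qed.

Lemma unit_dot1 (R : realType) d (u v : 'rV[R]_d) :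
  dotv u u = 1 -> dotv v v = 1 -> dotv u v = 1 -> u = v.
Proof.
rewrite !dotvE => hu hv huv.
have h0 : \sum_k (u 0 k - v 0 k) * (u 0 k - v 0 k) = 0.
  under eq_bigr => k _ do rewrite mulrBr mulrBl mulrBl.
  rewrite !sumrB hu hv.
  under eq_bigr => k _ do rewrite (mulrC (v 0 k)).
  by rewrite huv !subrr.
apply/rowP => k.
have := psumr_eq0P (fun i _ => sqr_ge0 (u 0 i - v 0 i)) h0.
move=> /(_ k isT) /eqP; rewrite mulf_eq0 orbb subr_eq0.
by move/eqP.
Qed.

Lemma inj_hom_aut (T : finType) (e : rel T) (f : T -> T) :
  injective f -> graph_hom e f -> graph_aut e f.
Proof.
move=> inj hom; split; first exact: injF_bij.
pose E := [set x : T * T | e x.1 x.2].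
pose g := fun x : T * T => (f x.1, f x.2).
have ginj : injective g.
  by move=> [a b] [c d] [] /inj -> /inj ->.
have sub : g @: E \subset E.
  apply/subsetP => y /imsetP [x]; rewrite inE => hx ->.
  by rewrite inE /=; apply: hom.
have eqE : g @: E = E by apply/eqP; rewrite eqEcard sub (card_imset _ ginj) leqnn.
move=> u v; apply/idP/idP; first exact: hom.
move=> h; have : (f u, f v) \in g @: E by rewrite eqE inE.
case/imsetP => [[a b]]; rewrite inE /= => hab [] /inj ha /inj hb.
by rewrite ha hb.
Qed.

Theorem theorem4p7 (R : realType) (T : finType) (eH eG : rel T)
    (t : R) (d : nat) (p : T -> 'rV[R]_d) :
  simple_graph eH ->
  uniquely_vector_colorable R eH ->
  is_vchrom eH t ->
  vector_coloring eH p t ->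
  injective p ->
  simple_graph eG ->
  connected_graph eG ->
  (forall u v, eH u v -> eG u v) ->
  (forall u v, eG u v -> Hprime t p u v) ->
  is_core eG.
Proof.
move=> _ uvc vch [t2 [pu pe]] pinj _ _ HG GH f hom.
apply: inj_hom_aut => //.
have opt : optimal_vector_coloring eH p by exists t; split => //.
have optf : optimal_vector_coloring eH (p \o f).
  exists t; split => //; split => //; split; first by move=> k; exact: pu.
  move=> i j hij.
  by have /andP [_ ->] := GH _ _ (hom _ _ (HG _ _ hij)).
move=> i j fij; apply: pinj; apply: unit_dot1 => //.
by rewrite -(uvc _ _ _ _ optf opt) /= fij pu.
Qed.
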